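(* Let $a \geq 0$ be a constant. If a function $f:(0,\infty) \to [0,\infty)$ satisfies $$\max\{f(x+y), a\} = \max\{f(x), f(y)\}$$ for all $x,y > 0$, then $f(z) = f(1) \geq a$ for every $z>0$. *)

(* Defs.v *)
From Stdlib Require Export Reals.

(* Main.v *)
Require Import Defs.
From Stdlib Require Import Reals.
From Stdlib Require Import Lra Lia.
Open Scope R_scope.

Lemma inr_lt_pow2 : forall n, INR n < 2 ^ n.
Proof.
  induction n as [|n IH].
  - simpl; lra.
  - rewrite S_INR. simpl.
    assert (1 <= 2 ^ n) by (apply pow_R1_Rle; lra). lra.
Qed.

Lemma exists_pow2 : forall t, 0 < t -> exists n, t < 2 ^ n.
Proof.
  intros t ht.
  destruct (archimed_cor1 (/ t)) as [N [HN HN0]].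
  { apply Rinv_0_lt_compat; lra. }
  exists N.
  assert (0 < INR N) by (apply lt_0_INR; lia).
  assert (t < INR N).
  { destruct (Rlt_or_le t (INR N)) as [h|h]; [exact h|].
    pose proof (Rinv_le_contravar (INR N) t H h). lra. }
  pose proof (inr_lt_pow2 N). lra.
Qed.

Theorem lemma2p1 (a : R) (f : R -> R)
  (ha : 0 <= a)
  (hf_nonneg : forall x, 0 < x -> 0 <= f x)
  (hf : forall x y, 0 < x -> 0 < y -> Rmax (f (x + y)) a = Rmax (f x) (f y)) :
  forall z, 0 < z -> f z = f 1 /\ a <= f 1.
Proof.
  assert (H1 : forall x, 0 < x -> a <= f x).
  { intros x hx. pose proof (hf x x hx hx) as E.
    rewrite (Rmax_left (f x) (f x)) in E by lra. rewrite <- E. apply Rmax_r. }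
  assert (H2 : forall x y, 0 < x -> 0 < y -> f (x + y) = Rmax (f x) (f y)).
  { intros x y hx hy. rewrite <- hf by assumption.
    rewrite Rmax_left; [reflexivity|]. apply H1; lra. }
  assert (Hmono : forall x y, 0 < x -> x <= y -> f x <= f y).
  { intros x y hx hxy. destruct (Req_dec x y) as [->|ne]; [lra|].
    replace y with (x + (y - x)) by ring.
    rewrite H2 by lra. apply Rmax_l. }
  assert (Hdbl : forall n x, 0 < x -> f (2 ^ n * x) = f x).
  { induction n as [|n IH]; intros x hx.
    - simpl. rewrite Rmult_1_l. reflexivity.
    - assert (0 < 2 ^ n) by (apply pow_lt; lra).
      replace (2 ^ S n * x) with (2 ^ n * x + 2 ^ n * x) by (simpl; ring).
      rewrite H2 by (apply Rmult_lt_0_compat; lra).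
      rewrite Rmax_left by lra. apply IH; lra. }
  intros z hz. split; [|apply H1; lra].
  destruct (exists_pow2 z hz) as [N1 HN1].
  assert (hiz : 0 < / z) by (apply Rinv_0_lt_compat; lra).
  destruct (exists_pow2 (/ z) hiz) as [N2 HN2].
  assert (A : f z <= f 1).
  { rewrite <- (Hdbl N1 1) by lra. apply Hmono; lra. }
  assert (B : f 1 <= f z).
  { rewrite <- (Hdbl N2 z) by lra. apply Hmono; [lra|].
    assert (0 < 2 ^ N2) by (apply pow_lt; lra).
    apply Rmult_lt_compat_r with (r := z) in HN2; [|lra].
    rewrite Rinv_l in HN2 by lra. lra. }
  lra.
Qed.
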